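(* Let $\mathcal C$ be a class of groups with invariant $\Lambda$-valued pseudo-norms which is closed under taking subgroups (with restricted pseudo-norm) and under isomorphism. Let $G$ be a finitely presented group and $\ell$ an invariant $\Lambda$-valued pseudo-norm on $G$. If $(G,\ell)$ is metrically LE$\mathcal C$, then $(G,\ell)$ is fully residually $\mathcal C$: for every finite $D\subseteq G$ and finite $Q\subseteq\Lambda\cap\mathbb Q$ with $0\in Q$ there are $(C,\ell_C)\in\mathcal C$ and a group homomorphism $\varphi:G\to C$ which is a $D$-$Q$-almost-homomorphism.
   Context: $\Lambda$ is a closed convex subset of $[0,\infty)$ containing $0$. A pseudo-norm on $G$ is $\ell:G\to\Lambda$ with $\ell(1)=0$, $\ell(g)=\ell(g^{-1})$, $\ell(gh)\le\ell(g)+\ell(h)$; invariant if $\ell(h^{-1}gh)=\ell(g)$. For pseudo-normed $(G_1,\ell_1),(G_2,\ell_2)$, finite $D\subseteq G_1$ and finite $Q\subseteq\Lambda\cap\mathbb Q$ with $0\in Q$, $\varphi:G_1\to G_2$ is a $D$-$Q$-almost-homomorphism if injective on $D$, $\varphi(hg)=\varphi(h)\varphi(g)$ whenever $h,g,hg\in D$, and $\ell_1(g)\,\square\,q\iff\ell_2(\varphi(g))\,\square\,q$ for all $g\in D,q\in Q,\square\in\{<,=,>\}$. $(G,\ell)$ is metrically LE$\mathcal C$ if for all such $D,Q$ there are $(C,\ell_C)\in\mathcal C$ and a $D$-$Q$-almost-homomorphism $G\to C$. *)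

(* Defs.v *)
From HB Require Import structures.
From mathcomp Require Import all_boot all_order all_algebra.
From mathcomp Require Import all_classical all_reals topology normedtype.
From Stdlib Require List.
Set Implicit Arguments. Unset Strict Implicit. Unset Printing Implicit Defensive.
Import Order.TTheory GRing.Theory Num.Theory.
Import numFieldNormedType.Exports.
Local Open Scope ring_scope.

Record group := Group {
  gcar :> Type;
  gmul : gcar -> gcar -> gcar;
  ginv : gcar -> gcar;
  gone : gcar;
  gmulA : forall x y z, gmul x (gmul y z) = gmul (gmul x y) z;
  gmul1 : forall x, gmul gone x = x;
  gmulV : forall x, gmul (ginv x) x = gone
}.

Definition is_hom (G H : group) (f : G -> H) : Prop :=
  forall x y, f (gmul x y) = gmul (f x) (f y).

Record pngroup (R : realType) := PNGroup {
  pgrp : group;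
  pnorm : pgrp -> R
}.

Definition good_Lambda (R : realType) (Lam : set R) : Prop :=
  closed Lam /\ (forall x, Lam x -> 0 <= x) /\ Lam 0 /\
  (forall x y t, Lam x -> Lam y -> 0 <= t <= 1 -> Lam (t * x + (1 - t) * y)).

Definition inv_pseudo_norm (R : realType) (Lam : set R) (X : pngroup R) : Prop :=
  let l := @pnorm R X in
  (forall g, Lam (l g)) /\
  l (gone (pgrp X)) = 0 /\
  (forall g, l g = l (ginv g)) /\
  (forall g h, l (gmul g h) <= l g + l h) /\
  (forall g h, l (gmul (ginv h) (gmul g h)) = l g).

Definition subgroup_pred (G : group) (P : G -> Prop) : Prop :=
  P (gone G) /\ (forall x y, P x -> P y -> P (gmul x y)) /\ (forall x, P x -> P (ginv x)).

Section SubGroup.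
Variables (G : group) (P : G -> Prop) (HP : subgroup_pred P).

Definition sub_car := {x : G | P x}.
Definition sub_mul (x y : sub_car) : sub_car :=
  exist _ (gmul (proj1_sig x) (proj1_sig y))
    ((proj1 (proj2 HP)) _ _ (proj2_sig x) (proj2_sig y)).
Definition sub_inv (x : sub_car) : sub_car :=
  exist _ (ginv (proj1_sig x)) ((proj2 (proj2 HP)) _ (proj2_sig x)).
Definition sub_one : sub_car := exist _ (gone G) (proj1 HP).

Lemma sub_eq (x y : sub_car) : proj1_sig x = proj1_sig y -> x = y.
Proof.
case: x => a pa; case: y => b pb /= e; subst b.
by rewrite (Prop_irrelevance pa pb).
Qed.

Lemma sub_mulA x y z : sub_mul x (sub_mul y z) = sub_mul (sub_mul x y) z.
Proof. by apply: sub_eq; rewrite /= gmulA. Qed.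
Lemma sub_mul1 x : sub_mul sub_one x = x.
Proof. by apply: sub_eq; rewrite /= gmul1. Qed.
Lemma sub_mulV x : sub_mul (sub_inv x) x = sub_one.
Proof. by apply: sub_eq; rewrite /= gmulV. Qed.

Definition subgroup : group :=
  @Group sub_car sub_mul sub_inv sub_one sub_mulA sub_mul1 sub_mulV.
End SubGroup.

Definition sub_pngroup (R : realType) (X : pngroup R) (P : pgrp X -> Prop)
  (HP : subgroup_pred P) : pngroup R :=
  @PNGroup R (subgroup HP) (fun x => pnorm (proj1_sig x)).

Definition closed_subgroups (R : realType) (C : pngroup R -> Prop) : Prop :=
  forall (X : pngroup R) (P : pgrp X -> Prop) (HP : subgroup_pred P),
    C X -> C (sub_pngroup HP).

Definition closed_iso (R : realType) (C : pngroup R -> Prop) : Prop :=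
  forall (X Y : pngroup R) (f : pgrp X -> pgrp Y),
    is_hom f -> bijective f -> (forall x, pnorm (f x) = pnorm x) ->
    C X -> C Y.

Definition almost_hom (R : realType) (X Y : pngroup R) (D : seq (pgrp X))
  (Q : seq rat) (f : pgrp X -> pgrp Y) : Prop :=
  (forall g h, List.In g D -> List.In h D -> f g = f h -> g = h) /\
  (forall h g, List.In h D -> List.In g D -> List.In (gmul h g) D ->
     f (gmul h g) = gmul (f h) (f g)) /\
  (forall g q, List.In g D -> q \in Q ->
     [/\ (pnorm g < ratr q <-> pnorm (f g) < ratr q),
         (pnorm g = ratr q <-> pnorm (f g) = ratr q) &
         (pnorm g > ratr q <-> pnorm (f g) > ratr q)]).

Definition admissible_Q (R : realType) (Lam : set R) (Q : seq rat) : Prop :=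
  0%R \in Q /\ (forall q, q \in Q -> Lam (ratr q)).

Definition metrically_LE (R : realType) (Lam : set R) (C : pngroup R -> Prop)
  (G : pngroup R) : Prop :=
  forall (D : seq (pgrp G)) (Q : seq rat), admissible_Q Lam Q ->
    exists (X : pngroup R) (f : pgrp G -> pgrp X), C X /\ almost_hom D Q f.

Definition fully_residually (R : realType) (Lam : set R) (C : pngroup R -> Prop)
  (G : pngroup R) : Prop :=
  forall (D : seq (pgrp G)) (Q : seq rat), admissible_Q Lam Q ->
    exists (X : pngroup R) (f : pgrp G -> pgrp X),
      C X /\ is_hom f /\ almost_hom D Q f.

(** Words in the letters x_i^{±1}, i < n: (i, false) = x_i, (i, true) = x_i^{-1}. *)
Definition word (n : nat) := seq ('I_n * bool).

Definition letter_inv n (a : 'I_n * bool) : 'I_n * bool := (a.1, ~~ a.2).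

(** The congruence on words generated by free cancellation and relators r = 1:
    words modulo [wcong rels] form the group <x_1..x_n | rels>. *)
Inductive wcong (n : nat) (rels : seq (word n)) : word n -> word n -> Prop :=
| wc_refl w : wcong rels w w
| wc_sym u v : wcong rels u v -> wcong rels v u
| wc_trans u v w : wcong rels u v -> wcong rels v w -> wcong rels u w
| wc_cat u u' v v' : wcong rels u u' -> wcong rels v v' -> wcong rels (u ++ v) (u' ++ v')
| wc_cancel a : wcong rels [:: a; letter_inv a] [::]
| wc_rel r : r \in rels -> wcong rels r [::].

Definition eval_letter (G : group) n (gens : 'I_n -> G) (a : 'I_n * bool) : G :=
  if a.2 then ginv (gens a.1) else gens a.1.

Definition eval_word (G : group) n (gens : 'I_n -> G) (w : word n) : G :=
  foldr (fun a acc => gmul (eval_letter gens a) acc) (gone G) w.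

(** G is finitely presented: there are finitely many generators and finitely
    many relators such that the natural evaluation map from
    <x_1..x_n | rels> onto G is an isomorphism (surjective, with kernel exactly
    the words congruent to the empty word). *)
Definition finitely_presented (G : group) : Prop :=
  exists (n : nat) (gens : 'I_n -> G) (rels : seq (word n)),
    (forall x : G, exists w : word n, eval_word gens w = x) /\
    (forall w : word n, eval_word gens w = gone G <-> wcong rels w [::]).

(* Main.v *)
Require Import Defs.
From mathcomp Require Import all_boot all_order all_algebra.
From mathcomp Require Import all_classical all_reals topology normedtype.
From Stdlib Require List.
Set Implicit Arguments. Unset Strict Implicit. Unset Printing Implicit Defensive.

Section GroupLemmas.
Variable H : group.
Implicit Types x y z : H.

Lemma gmulVr x : gmul x (ginv x) = gone H.
Proof.
set y := ginv x.
rewrite -[gmul x y]gmul1 -(gmulV y) -gmulA (gmulA y x y).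
by rewrite /y gmulV gmul1 gmulV.
Qed.

Lemma gmulr1 x : gmul x (gone H) = x.
Proof. by rewrite -(gmulV x) gmulA gmulVr gmul1. Qed.

Lemma gcancel x y z : gmul x y = gmul x z -> y = z.
Proof.
move=> e; by rewrite -(gmul1 y) -(gmulV x) -gmulA e gmulA gmulV gmul1.
Qed.

Lemma ginv_uniq x y : gmul x y = gone H -> x = ginv y.
Proof.
move=> e; by rewrite -(gmulr1 x) -(gmulVr y) gmulA e gmul1.
Qed.

Lemma ginvK x : ginv (ginv x) = x.
Proof. by apply/esym/ginv_uniq; rewrite gmulVr. Qed.

Lemma ginvM x y : ginv (gmul x y) = gmul (ginv y) (ginv x).
Proof.
apply/esym/ginv_uniq.
by rewrite -gmulA (gmulA (ginv x)) gmulV gmul1 gmulV.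
Qed.

Lemma eval_cat n (gens : 'I_n -> H) (u v : word n) :
  eval_word gens (u ++ v) = gmul (eval_word gens u) (eval_word gens v).
Proof.
elim: u => [|a u IH] /=; first by rewrite gmul1.
by rewrite IH gmulA.
Qed.

Definition winv n (w : word n) : word n := rev (map (@letter_inv n) w).

Lemma eval_winv n (gens : 'I_n -> H) (w : word n) :
  eval_word gens (winv w) = ginv (eval_word gens w).
Proof.
elim: w => [|a w IH] /=.
  by rewrite /winv /= -{1}(gmulV (gone H)) gmulr1.
rewrite /winv map_cons rev_cons -cats1 eval_cat -/(winv w) IH /= gmulr1 ginvM.
congr gmul; rewrite /eval_letter /letter_inv /=.
by case: a.2 => //=; rewrite ginvK.
Qed.

Lemma eval_wcong n (gens : 'I_n -> H) rels (u v : word n) :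
  (forall r, r \in rels -> eval_word gens r = gone H) ->
  wcong rels u v -> eval_word gens u = eval_word gens v.
Proof.
move=> Hr; elim => // ; try by [].
- by move=> ? ? ? _ -> _ ->.
- by move=> ? ? ? ? _ e1 _ e2; rewrite !eval_cat e1 e2.
- move=> a /=; rewrite gmulr1 /eval_letter /letter_inv /=.
  by case: a.2 => /=; rewrite ?gmulV ?gmulVr.
Qed.

End GroupLemmas.

Fixpoint sufs n (w : word n) : seq (word n) :=
  w :: (if w is _ :: s then sufs s else [::]).

Theorem corollary5p6 (R : realType) (Lam : set R) (C : pngroup R -> Prop)
  (G : pngroup R) :
  good_Lambda Lam ->
  (forall X, C X -> inv_pseudo_norm Lam X) ->
  closed_subgroups C ->
  closed_iso C ->
  finitely_presented (pgrp G) ->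
  inv_pseudo_norm Lam G ->
  metrically_LE Lam C G ->
  fully_residually Lam C G.
Proof.
move=> _ _ _ _ [n [gens [rels [Hsurj Hker]]]] _ HLE D Q HQ.
pose G0 := pgrp G.
have [wd Hwd] : {wd : G0 -> word n | forall x, eval_word gens (wd x) = x}.
  by exists (fun x => projT1 (cid (Hsurj x))) => x; case: (cid _).
pose W := (rels ++ map wd D)%list.
pose elems (w : word n) : seq G0 :=
  (List.map (eval_word gens) (sufs w) ++
   List.flat_map (fun a => [:: eval_letter gens a; gens a.1; ginv (gens a.1)]) w)%list.
pose D' := (D ++ gone G0 :: List.flat_map elems W)%list.
have [X [f [CX [Hinj [Hmul Hnorm]]]]] := HLE D' Q HQ.
have inD' : forall w x, List.In w W -> List.In x (elems w) -> List.In x D'.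
  move=> w x Hw Hx; apply/List.in_app_iff; right; right.
  by apply/List.in_flat_map; exists w.
have oneD : List.In (gone G0) D'.
  by apply/List.in_app_iff; right; left.
have f1 : f (gone G0) = gone (pgrp X).
  have := Hmul _ _ oneD oneD; rewrite gmul1 => /(_ oneD) e.
  by apply: (@gcancel _ (f (gone G0))); rewrite -e gmulr1.
pose ef (w : word n) := eval_word (fun i => f (gens i)) w.
have Hword : forall w, List.In w W -> f (eval_word gens w) = ef w.
  move=> w Hw.
  have Hs : forall s, List.In (eval_word gens s) (List.map (eval_word gens) (sufs s)).
    by case=> [|a s] /=; left.
  suff: forall s, (forall a, List.In a s -> List.In a w) ->
     (forall t, List.In t (sufs s) -> List.In t (sufs w)) ->
     f (eval_word gens s) = ef s by apply.
  elim => [|a s IH] Ha Ht /=; first exact: f1.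
  have tin : List.In (a :: s) (sufs w) by apply: Ht; left.
  have inE : forall x, List.In x (elems w) -> List.In x D' by move=> x; apply: inD'.
  have sufsub : forall t, List.In t (sufs s) -> List.In t (sufs w).
    by move=> t Hts; apply: Ht; right.
  have aw : List.In a w by apply: Ha; left.
  have Hlet : forall x, List.In x [:: eval_letter gens a; gens a.1; ginv (gens a.1)] ->
      List.In x D'.
    move=> x Hx; apply: inE; apply/List.in_app_iff; right.
    by apply/List.in_flat_map; exists a.
  have eA : List.In (eval_letter gens a) D' by apply: Hlet; left.
  have sufin : forall t, List.In t (sufs w) -> List.In (eval_word gens t) D'.
    move=> t Htw; apply: inE; apply/List.in_app_iff; left.
    by apply/List.in_map.
  have eS : List.In (eval_word gens s) D'.
    by apply: sufin; apply: sufsub; case: (s) => /=; left.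
  rewrite Hmul //; last by apply: (sufin (a :: s)); apply: Ht; left.
  rewrite IH //; last by move=> b Hb; apply: Ha; right.
  congr gmul; rewrite /eval_letter; case: (a.2); last by [].
  have g1 : List.In (gens a.1) D' by apply: Hlet; right; left.
  have g2 : List.In (ginv (gens a.1)) D' by apply: Hlet; right; right; left.
  apply: ginv_uniq; rewrite -Hmul // ?gmulV //.
have inW : forall r, r \in rels -> List.In r W.
  move=> r; rewrite /W; elim: (rels) => [|r0 rs IH] //=.
  rewrite inE => /orP [/eqP ->| /IH]; [by left | by right].
have Hrel : forall r, r \in rels -> ef r = gone (pgrp X).
  move=> r Hr; rewrite -Hword; last exact: inW.
  by rewrite (proj2 (Hker r) (wc_rel Hr)) f1.
have Hwd_ok : forall w1 w2, eval_word gens w1 = eval_word gens w2 -> ef w1 = ef w2.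
  move=> w1 w2 e.
  have : wcong rels (w1 ++ winv w2) [::].
    by apply/Hker; rewrite eval_cat eval_winv e gmulVr.
  move/(eval_wcong Hrel) => /=; rewrite eval_cat eval_winv => e'.
  by rewrite /ef (ginv_uniq e') ginvK.
have inDD : forall g, List.In g D -> List.In g D'.
  by move=> g Hg; apply/List.in_app_iff; left.
have Hagree : forall g, List.In g D -> ef (wd g) = f g.
  move=> g Hg; rewrite -{2}(Hwd g) Hword //.
  by apply/List.in_app_iff; right; apply/List.in_map.
exists X, (fun x => ef (wd x)); split => //; split.
  move=> x y /=; rewrite /ef -eval_cat; apply: Hwd_ok; by rewrite eval_cat !Hwd.
split; [|split].
- by move=> g h Hg Hh; rewrite !Hagree // => /Hinj; apply; apply: inDD.
- move=> h g Hh Hg Hhg; rewrite !Hagree //; apply: Hmul; exact: inDD.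
- by move=> g q Hg Hq; rewrite Hagree //; apply: Hnorm => //; apply: inDD.
Qed.
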